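(* Let $(\mathfrak{g},V,\Theta)$ be a Lie-Leibniz triple, let $\mathfrak{h}=\mathrm{Im}(\Theta)$, and let $(T_{\leq-1},\llbracket\,.\,,.\,\rrbracket)$ be its associated negatively graded Lie algebra. Then there exists a unique family of $\mathfrak{h}$-equivariant linear maps $\partial=(\partial_{-i}:T_{-i-1}\to T_{-i})_{i\geq1}$ (a degree $+1$ map, extended as a graded derivation of $\Lambda^\bullet(T_{\leq-1})$) such that $\partial\llbracket u,v\rrbracket=2\{u,v\}$, $\partial\llbracket u,x\rrbracket=\Theta(u)\cdot x-\llbracket u,\partial(x)\rrbracket$, $\partial\llbracket x,y\rrbracket=\llbracket\partial(x),y\rrbracket+(-1)^{|x|}\llbracket x,\partial(y)\rrbracket$ for all $u,v\in T_{-1}$ and $x,y\in T_{\leq-2}$. Moreover $\partial_{-i}\circ\partial_{-i-1}=0$ for every $i\geq1$.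
   Context: A (left) Leibniz algebra is a vector space $V$ with bilinear $\circ$ satisfying $x\circ(y\circ z)=(x\circ y)\circ z+y\circ(x\circ z)$; $\{x,y\}=\frac12(x\circ y+y\circ x)$. A Lie-Leibniz triple $(\mathfrak{g},V,\Theta)$ consists of a Lie algebra $\mathfrak{g}$, a $\mathfrak{g}$-module $V$ (action $a\cdot x$) with a Leibniz product $\circ$, and a linear map $\Theta:V\to\mathfrak{g}$ with $x\circ y=\Theta(x)\cdot y$ and $\Theta(x\circ y)=[\Theta(x),\Theta(y)]$. Associated graded Lie algebra: let $K$ be the largest $\mathfrak{g}$-submodule of $S^2(V)$ contained in the kernel of $S^2(V)\to V$, $x\odot y\mapsto\{x,y\}$. Let $F=\bigoplus_{i\geq1}F_{-i}$ be the free graded Lie algebra generated by $V[1]$ (a copy of $V$ in degree $-1$); identify $F_{-2}$ with $S^2(V)$ via $[x,y]\leftrightarrow x\odot y$, and let $\mathfrak g$ act on $F$ by the unique derivations extending its action on $V$. Put $K_{-2}=K$ and $K_{-i}=\sum_{j=1}^{i-2}[F_{-j},K_{-i+j}]$ for $i\geq3$; $K_\bullet$ is a graded Lie ideal and $\mathfrak{g}$-submodule of $F$. Define $T_{-1}=V[1]$, $T_{-i}=F_{-i}/K_{-i}$ ($i\ge2$), $T_{\leq-1}=F/K_\bullet$ with the induced bracket $\llbracket\,.\,,.\,\rrbracket$ and $\mathfrak{g}$-action. $\mathfrak{h}$-equivariance of $\partial_{-i}$ means $\partial_{-i}(a\cdot x)=a\cdot\partial_{-i}(x)$ for $a\in\mathfrak{h}$.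 Here $T_{\leq -2}=\bigoplus_{i\ge2}T_{-i}$. *)

(* Defs.v *)
From HB Require Import structures.
From mathcomp Require Import all_boot all_order all_algebra.
Set Implicit Arguments.
Unset Strict Implicit.
Unset Printing Implicit Defensive.
Import GRing.Theory.
Local Open Scope ring_scope.

Definition linear_map (K : fieldType) (A B : lmodType K) (f : A -> B) : Prop :=
  forall (c : K) x y, f (c *: x + y) = c *: f x + f y.

Definition bilinear_map (K : fieldType) (A B C : lmodType K) (f : A -> B -> C) : Prop :=
  (forall (c : K) x x' y, f (c *: x + x') y = c *: f x y + f x' y) /\
  (forall (c : K) x y y', f x (c *: y + y') = c *: f x y + f x y').

Definition is_subspace (K : fieldType) (A : lmodType K) (W : A -> Prop) : Prop :=
  W 0 /\ (forall (c : K) x y, W x -> W y -> W (c *: x + y)).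

Definition is_Lie_algebra (K : fieldType) (g : lmodType K) (br : g -> g -> g) : Prop :=
  bilinear_map br /\ (forall x, br x x = 0) /\
  (forall x y z, br x (br y z) + br y (br z x) + br z (br x y) = 0).

Definition is_Lie_module (K : fieldType) (g V : lmodType K) (brg : g -> g -> g)
  (act : g -> V -> V) : Prop :=
  bilinear_map act /\
  (forall a b x, act (brg a b) x = act a (act b x) - act b (act a x)).

Definition is_Leibniz (K : fieldType) (V : lmodType K) (circ : V -> V -> V) : Prop :=
  bilinear_map circ /\
  (forall x y z, circ x (circ y z) = circ (circ x y) z + circ y (circ x z)).

Definition is_Lie_Leibniz_triple (K : fieldType) (g V : lmodType K)
  (brg : g -> g -> g) (act : g -> V -> V) (circ : V -> V -> V) (Theta : V -> g) : Prop :=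
  is_Lie_algebra brg /\ is_Lie_module brg act /\ is_Leibniz circ /\ linear_map Theta /\
  (forall x y, circ x y = act (Theta x) y) /\
  (forall x y, Theta (circ x y) = brg (Theta x) (Theta y)).

Definition sym_bracket (K : fieldType) (V : lmodType K) (circ : V -> V -> V) (x y : V) : V :=
  (2 : K)^-1 *: (circ x y + circ y x).

(* A graded vector space L = (+)_{i >= 1} L_{-i}; the component of degree -i is
   the subspace G i (G 0 is trivial). *)
Definition is_neg_grading (K : fieldType) (L : lmodType K) (G : nat -> L -> Prop) : Prop :=
  [/\ (forall i, is_subspace (G i)),
      (forall x, G 0%N x -> x = 0),
      (forall x, exists n (xs : nat -> L), (forall i, G i (xs i)) /\ x = \sum_(i < n) xs i) &
      (forall n (xs : nat -> L), (forall i, G i (xs i)) -> \sum_(i < n) xs i = 0 ->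
          forall i, (i < n)%N -> xs i = 0)].

Definition is_neg_graded_Lie (K : fieldType) (L : lmodType K) (br : L -> L -> L)
  (G : nat -> L -> Prop) : Prop :=
  [/\ is_neg_grading G, bilinear_map br,
      (forall i j x y, G i x -> G j y -> G (i + j)%N (br x y)),
      (forall i j x y, G i x -> G j y -> br x y = - (((-1 : K) ^+ (i * j)) *: br y x)) &
      (forall i j x y z, G i x -> G j y ->
         br x (br y z) = br (br x y) z + ((-1 : K) ^+ (i * j)) *: br y (br x z))].

Definition graded_Lie_morphism (K : fieldType) (L M : lmodType K)
  (brL : L -> L -> L) (GL : nat -> L -> Prop) (brM : M -> M -> M) (GM : nat -> M -> Prop)
  (phi : L -> M) : Prop :=
  [/\ linear_map phi,
      (forall x y, phi (brL x y) = brM (phi x) (phi y)) &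
      (forall i x, GL i x -> GM i (phi x))].

Definition is_free_graded_Lie (K : fieldType) (V F : lmodType K) (brF : F -> F -> F)
  (GF : nat -> F -> Prop) (iota : V -> F) : Prop :=
  [/\ is_neg_graded_Lie brF GF, linear_map iota, (forall v, GF 1%N (iota v)) &
      forall (M : lmodType K) (brM : M -> M -> M) (GM : nat -> M -> Prop),
        is_neg_graded_Lie brM GM ->
        forall f : V -> M, linear_map f -> (forall v, GM 1%N (f v)) ->
        exists phi : F -> M,
          [/\ graded_Lie_morphism brF GF brM GM phi,
              (forall v, phi (iota v) = f v) &
              (forall psi : F -> M, graded_Lie_morphism brF GF brM GM psi ->
                 (forall v, psi (iota v) = f v) -> forall x, psi x = phi x)]].

Definition derivation_extension (K : fieldType) (g V F : lmodType K) (act : g -> V -> V)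
  (brF : F -> F -> F) (GF : nat -> F -> Prop) (iota : V -> F) (rhoF : g -> F -> F) : Prop :=
  forall a, [/\ linear_map (rhoF a),
                (forall x y, rhoF a (brF x y) = brF (rhoF a x) y + brF x (rhoF a y)),
                (forall i x, GF i x -> GF i (rhoF a x)) &
                (forall v, rhoF a (iota v) = iota (act a v))].

(* w in F_{-2} = S^2(V) lies in the kernel of x (.) y |-> {x,y}
   (identification [x,y] <-> x (.) y) *)
Definition in_sym_kernel (K : fieldType) (V F : lmodType K) (circ : V -> V -> V)
  (brF : F -> F -> F) (iota : V -> F) (w : F) : Prop :=
  exists n (c : 'I_n -> K) (x y : 'I_n -> V),
    w = \sum_(k < n) c k *: brF (iota (x k)) (iota (y k)) /\
    \sum_(k < n) c k *: sym_bracket circ (x k) (y k) = 0.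

(* K = K_{-2}: the largest g-submodule of F_{-2} contained in that kernel *)
Definition K2 (K : fieldType) (g V F : lmodType K) (circ : V -> V -> V)
  (brF : F -> F -> F) (GF : nat -> F -> Prop) (iota : V -> F) (rhoF : g -> F -> F)
  (x : F) : Prop :=
  exists W : F -> Prop,
    [/\ is_subspace W, (forall a w, W w -> W (rhoF a w)),
        (forall w, W w -> GF 2%N w /\ in_sym_kernel circ brF iota w) & W x].

(* Kdeg i = K_{-i}: K_{-2} = K, and for i >= 3, K_{-i} = sum_{j=1}^{i-2} [F_{-j}, K_{-i+j}]
   (the span of the brackets [f,k], f in F_{-j}, k in K_{-m}, j >= 1, m >= 2, j+m = i). *)
Inductive Kdeg (K : fieldType) (g V F : lmodType K) (circ : V -> V -> V)
  (brF : F -> F -> F) (GF : nat -> F -> Prop) (iota : V -> F) (rhoF : g -> F -> F)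
  : nat -> F -> Prop :=
| Kdeg_two x : K2 circ brF GF iota rhoF x -> Kdeg circ brF GF iota rhoF 2%N x
| Kdeg_br j m f k : (1 <= j)%N -> (2 <= m)%N -> GF j f ->
    Kdeg circ brF GF iota rhoF m k -> Kdeg circ brF GF iota rhoF (j + m)%N (brF f k)
| Kdeg_zero i : (3 <= i)%N -> Kdeg circ brF GF iota rhoF i 0
| Kdeg_comb i (c : K) x y : (3 <= i)%N -> Kdeg circ brF GF iota rhoF i x ->
    Kdeg circ brF GF iota rhoF i y -> Kdeg circ brF GF iota rhoF i (c *: x + y).

Definition Kbullet (K : fieldType) (g V F : lmodType K) (circ : V -> V -> V)
  (brF : F -> F -> F) (GF : nat -> F -> Prop) (iota : V -> F) (rhoF : g -> F -> F)
  (x : F) : Prop :=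
  exists n (xs : nat -> F), (forall i, (2 <= i)%N -> Kdeg circ brF GF iota rhoF i (xs i)) /\
    x = \sum_(2 <= i < n) xs i.

Definition is_graded_quotient (K : fieldType) (F T : lmodType K)
  (brF : F -> F -> F) (GF : nat -> F -> Prop) (brT : T -> T -> T) (GT : nat -> T -> Prop)
  (pi : F -> T) (Kset : F -> Prop) : Prop :=
  [/\ graded_Lie_morphism brF GF brT GT pi,
      (forall t, exists x, pi x = t) &
      (forall x, pi x = 0 <-> Kset x)].

(* The conditions on d : T -> T encoding the family (d_{-i} : T_{-i-1} -> T_{-i})_{i>=1}
   (d is taken to vanish on T_{-1}, where the family is not defined).
   u, v in T_{-1} are written pi (iota u0), pi (iota v0) with u0, v0 in V. *)
Definition is_tower_differential (K : fieldType) (g V T : lmodType K)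
  (circ : V -> V -> V) (Theta : V -> g) (brT : T -> T -> T) (GT : nat -> T -> Prop)
  (tau : V -> T) (rhoT : g -> T -> T) (d : T -> T) : Prop :=
  linear_map d /\
      (forall x, GT 1%N x -> d x = 0) /\
      (forall i x, (1 <= i)%N -> GT i.+1 x -> GT i (d x)) /\
      (* h-equivariance, h = Im Theta *)
      (forall w i x, (1 <= i)%N -> GT i.+1 x -> d (rhoT (Theta w) x) = rhoT (Theta w) (d x)) /\
      (forall u v, d (brT (tau u) (tau v)) = tau ((2 : K) *: sym_bracket circ u v)) /\
      (forall u i x, (2 <= i)%N -> GT i x ->
         d (brT (tau u) x) = rhoT (Theta u) x - brT (tau u) (d x)) /\
      (forall i j x y, (2 <= i)%N -> (2 <= j)%N -> GT i x -> GT j y ->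
         d (brT x y) = brT (d x) y + ((-1 : K) ^+ i) *: brT x (d y)).

(* Main.v *)
Require Import Defs.
From HB Require Import structures.
From mathcomp Require Import all_boot all_order all_algebra ssrAC ring.
From Stdlib Require Import ClassicalEpsilon.
Set Implicit Arguments.
Unset Strict Implicit.
Unset Printing Implicit Defensive.
Import GRing.Theory.
Local Open Scope ring_scope.


Section Basics.
Variable K : fieldType.

Section LinMap.
Variables (A B : lmodType K) (f : A -> B) (Hf : linear_map f).
Lemma lm0 : f 0 = 0.
Proof. by have := Hf (-1) 0 0; rewrite scaler0 addr0 scaleN1r addNr. Qed.
Lemma lmD x y : f (x + y) = f x + f y.
Proof. by have := Hf 1 x y; rewrite !scale1r. Qed.
Lemma lmZ c x : f (c *: x) = c *: f x.
Proof. by have := Hf c x 0; rewrite addr0 lm0 addr0. Qed.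
Lemma lmN x : f (- x) = - f x.
Proof. by rewrite -scaleN1r lmZ scaleN1r. Qed.
Lemma lmB x y : f (x - y) = f x - f y.
Proof. by rewrite lmD lmN. Qed.
Lemma lm_sum I r (P : pred I) (E : I -> A) :
  f (\sum_(i <- r | P i) E i) = \sum_(i <- r | P i) f (E i).
Proof. exact: (big_morph f lmD lm0). Qed.
End LinMap.

Lemma lm_comp (A B C : lmodType K) (f : A -> B) (h : B -> C) :
  linear_map f -> linear_map h -> linear_map (fun x => h (f x)).
Proof. by move=> hf hh c x y; rewrite hf hh. Qed.

Section Bil.
Variables (A B C : lmodType K) (br : A -> B -> C) (Hb : bilinear_map br).
Lemma bl_l y : linear_map (br^~ y). Proof. by move=> c x x'; case: Hb => h _; apply: h. Qed.
Lemma bl_r x : linear_map (br x). Proof. by move=> c y y'; case: Hb => _ h; apply: h. Qed.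
Lemma br0l y : br 0 y = 0. Proof. exact: (lm0 (bl_l y)). Qed.
Lemma br0r x : br x 0 = 0. Proof. exact: (lm0 (bl_r x)). Qed.
Lemma brDl x x' y : br (x + x') y = br x y + br x' y. Proof. exact: (lmD (bl_l y)). Qed.
Lemma brDr x y y' : br x (y + y') = br x y + br x y'. Proof. exact: (lmD (bl_r x)). Qed.
Lemma brZl c x y : br (c *: x) y = c *: br x y. Proof. exact: (lmZ (bl_l y)). Qed.
Lemma brZr c x y : br x (c *: y) = c *: br x y. Proof. exact: (lmZ (bl_r x)). Qed.
Lemma brNl x y : br (- x) y = - br x y. Proof. exact: (lmN (bl_l y)). Qed.
Lemma brNr x y : br x (- y) = - br x y. Proof. exact: (lmN (bl_r x)). Qed.
Lemma brBl x x' y : br (x - x') y = br x y - br x' y. Proof. exact: (lmB (bl_l y)). Qed.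
Lemma brBr x y y' : br x (y - y') = br x y - br x y'. Proof. exact: (lmB (bl_r x)). Qed.
End Bil.

Section Subsp.
Variables (A : lmodType K) (W : A -> Prop) (HW : is_subspace W).
Lemma ss0 : W 0. Proof. by case: HW. Qed.
Lemma ssC c x y : W x -> W y -> W (c *: x + y). Proof. by case: HW => _; apply. Qed.
Lemma ssD x y : W x -> W y -> W (x + y).
Proof. by move=> hx hy; have := ssC 1 hx hy; rewrite scale1r. Qed.
Lemma ssZ c x : W x -> W (c *: x).
Proof. by move=> hx; have := ssC c hx ss0; rewrite addr0. Qed.
Lemma ssN x : W x -> W (- x).
Proof. by move=> hx; rewrite -scaleN1r; apply: ssZ. Qed.
Lemma ssB x y : W x -> W y -> W (x - y).
Proof. by move=> hx hy; apply: ssD => //; apply: ssN. Qed.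
Lemma ss_sum I r (P : pred I) (E : I -> A) :
  (forall i, P i -> W (E i)) -> W (\sum_(i <- r | P i) E i).
Proof. by move=> h; apply: big_ind => //; [exact: ss0 | exact: ssD]. Qed.
End Subsp.

Lemma sum_delta (A : lmodType K) (N k : nat) (a : A) :
  \sum_(i < N) (if (i : nat) == k then a else 0) = if (k < N)%N then a else 0.
Proof.
case: (ltnP k N) => h.
  rewrite (bigD1 (Ordinal h)) //= eqxx big1 ?addr0 // => i hi.
  rewrite ifN //; apply: contraNneq hi => e; apply/eqP/val_inj => /=; exact/eqP.
rewrite big1 // => i _; rewrite ifN //; apply/negP => /eqP e.
by have := ltn_ord i; rewrite e ltnNge h.
Qed.

Definition sg (n : nat) : K := (-1) ^+ n.
Lemma sgD m n : sg (m + n) = sg m * sg n. Proof. by rewrite /sg exprD. Qed.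
Lemma sgg n : sg n * sg n = 1.
Proof. by rewrite /sg -exprMn mulrNN mulr1 expr1n. Qed.
Lemma sg0 : sg 0 = 1. Proof. by []. Qed.
Lemma sg1 : sg 1 = -1. Proof. by rewrite /sg expr1. Qed.
Lemma sgS n : sg n.+1 = - sg n. Proof. by rewrite /sg exprS mulN1r. Qed.

Section Grading.
Variables (L : lmodType K) (G : nat -> L -> Prop) (HG : is_neg_grading G).

Lemma Gsub i : is_subspace (G i). Proof. by case: HG. Qed.
Lemma G0 x : G 0 x -> x = 0. Proof. by case: HG => _ h _ _; apply: h. Qed.
Lemma G_0 i : G i 0. Proof. exact: ss0 (Gsub i). Qed.

Definition ext n (xs : nat -> L) i := if (i < n)%N then xs i else 0.

Lemma ext_hom n xs : (forall i, G i (xs i)) -> forall i, G i (ext n xs i).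
Proof. by move=> h i; rewrite /ext; case: ifP => _ //; apply: G_0. Qed.

Lemma sum_ext n (xs : nat -> L) N : (n <= N)%N -> \sum_(i < n) xs i = \sum_(i < N) ext n xs i.
Proof.
move=> le; rewrite -(subnKC le) big_split_ord /= [X in _ = _ + X]big1 ?addr0.
  by apply: eq_bigr => i _; rewrite /ext /= ltn_ord.
by move=> i _; rewrite /ext /= ltnNge leq_addr.
Qed.

Lemma dec_unique n xs m ys : (forall i, G i (xs i)) -> (forall i, G i (ys i)) ->
  \sum_(i < n) xs i = \sum_(i < m) ys i -> forall i, ext n xs i = ext m ys i.
Proof.
move=> hx hy e i; set N := maxn n m.
have hz : forall i, G i (ext n xs i - ext m ys i).
  by move=> k; apply: ssB; [exact: Gsub | exact: ext_hom | exact: ext_hom].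
have s0 : \sum_(k < N) (ext n xs k - ext m ys k) = 0.
  by rewrite sumrB -!sum_ext ?leq_maxl ?leq_maxr // e subrr.
case: (ltnP i N) => hi.
  by apply/eqP; rewrite -subr_eq0; apply/eqP; case: HG => _ _ _ u; apply: (u N _ hz s0).
by rewrite /ext !ifN // -leqNgt; apply: leq_trans hi; rewrite ?leq_maxl ?leq_maxr.
Qed.

Lemma dec_ex x : exists n xs, (forall i, G i (xs i)) /\ x = \sum_(i < n) xs i.
Proof. by case: HG => _ _ h _; apply: h. Qed.

Definition decs x := constructive_indefinite_description _ (dec_ex x).
Definition dn x := proj1_sig (decs x).
Definition decs2 x := constructive_indefinite_description _ (proj2_sig (decs x)).
Definition dxs x := proj1_sig (decs2 x).
Lemma dxs_spec x : (forall i, G i (dxs x i)) /\ x = \sum_(i < dn x) dxs x i.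
Proof. exact: (proj2_sig (decs2 x)). Qed.

Definition gcomp i x := ext (dn x) (dxs x) i.

Lemma gcomp_hom i x : G i (gcomp i x).
Proof. by apply: ext_hom; case: (dxs_spec x). Qed.

Lemma gcomp_dec n xs x : (forall i, G i (xs i)) -> x = \sum_(i < n) xs i ->
  forall i, gcomp i x = ext n xs i.
Proof.
move=> hx e i; case: (dxs_spec x) => h1 h2.
by apply: dec_unique => //; rewrite -h2.
Qed.

Lemma gcomp_big i x : (dn x <= i)%N -> gcomp i x = 0.
Proof. by move=> h; rewrite /gcomp /ext ifN // -leqNgt. Qed.

Lemma gcomp_sum x N : (dn x <= N)%N -> x = \sum_(i < N) gcomp i x.
Proof. by move=> h; case: (dxs_spec x) => _ e; rewrite {1}e (sum_ext _ h). Qed.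

Lemma gcomp_lin i : linear_map (gcomp i).
Proof.
move=> c x y; set N := maxn (dn x) (dn y).
have hz : forall k, G k (c *: gcomp k x + gcomp k y).
  by move=> k; apply: ssC; [exact: Gsub | exact: gcomp_hom | exact: gcomp_hom].
have e : c *: x + y = \sum_(k < N) (c *: gcomp k x + gcomp k y).
  by rewrite big_split /= -scaler_sumr -!gcomp_sum ?leq_maxl ?leq_maxr.
rewrite (gcomp_dec hz e) /ext; case: ifP => // /negbT; rewrite -leqNgt => h.
rewrite !gcomp_big ?scaler0 ?addr0 //; apply: leq_trans h; rewrite ?leq_maxl ?leq_maxr //.
Qed.

Lemma gcomp_homog k x : G k x -> forall i, gcomp i x = if i == k then x else 0.
Proof.
move=> hk i.
have hz : forall j, G j (if j == k then x else 0).
  by move=> j; case: eqP => [->|_] //; apply: G_0.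
have e : x = \sum_(j < k.+1) (if (j : nat) == k then x else 0) by rewrite sum_delta ltnSn.
rewrite (gcomp_dec hz e) /ext; case: ifP => //; case: eqP => // -> ; by rewrite ltnSn.
Qed.

Definition sgn x := \sum_(i < dn x) sg i *: gcomp i x.

Lemma sgn_N x N : (dn x <= N)%N -> sgn x = \sum_(i < N) sg i *: gcomp i x.
Proof.
move=> le; rewrite /sgn -(subnKC le) big_split_ord /= [X in _ = _ + X]big1 ?addr0 //.
by move=> i _; rewrite gcomp_big ?scaler0 // leq_addr.
Qed.

Lemma sgn_lin : linear_map sgn.
Proof.
move=> c x y; set N := maxn (dn (c *: x + y)) (maxn (dn x) (dn y)).
have h1 : (dn (c *: x + y) <= N)%N by rewrite leq_maxl.
have h2 : (dn x <= N)%N by rewrite (leq_trans _ (leq_maxr _ _)) ?leq_maxl.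
have h3 : (dn y <= N)%N by rewrite (leq_trans _ (leq_maxr _ _)) ?leq_maxr.
rewrite (sgn_N h1) (sgn_N h2) (sgn_N h3) scaler_sumr -big_split /=.
by apply: eq_bigr => i _; rewrite gcomp_lin scalerDr !scalerA mulrC.
Qed.

Lemma sgn_hom k x : G k x -> sgn x = sg k *: x.
Proof.
move=> hk; set N := maxn (dn x) k.+1.
rewrite (sgn_N (x:=x) (N:=N) (leq_maxl _ _)).
rewrite (eq_bigr (fun i : 'I_N => if (i : nat) == k then sg k *: x else 0)).
  by rewrite sum_delta (leq_trans _ (leq_maxr _ _)).
move=> i _; rewrite (gcomp_homog hk); case: eqP => [->|_] //; by rewrite scaler0.
Qed.

End Grading.

Section Lift.
Variables (F T : lmodType K) (GF : nat -> F -> Prop) (GT : nat -> T -> Prop).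
Variables (HGF : is_neg_grading GF) (HGT : is_neg_grading GT) (pi : F -> T).
Hypotheses (pil : linear_map pi) (pid : forall i x, GF i x -> GT i (pi x))
  (pis : forall t, exists x, pi x = t).
Lemma lift_hom i t : GT i t -> exists x, GF i x /\ pi x = t.
Proof.
move=> ht; case: (pis t) => x0 e.
exists (gcomp HGF i x0); split; first exact: gcomp_hom.
have e2 : t = \sum_(k < dn HGF x0) pi (gcomp HGF k x0).
  by rewrite -lm_sum // -e -gcomp_sum.
have := gcomp_dec HGT (fun k => pid (gcomp_hom HGF k x0)) e2 i.
rewrite (gcomp_homog HGT ht) eqxx /ext => ->.
by case: ifP => // /negbT; rewrite -leqNgt => h; rewrite gcomp_big // lm0.
Qed.
End Lift.

End Basics.


Section NL.
Variables (K : fieldType) (L : lmodType K) (br : L -> L -> L) (G : nat -> L -> Prop).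
Hypothesis H : is_neg_graded_Lie br G.
Lemma nlG : is_neg_grading G. Proof. by case: H. Qed.
Lemma nlB : bilinear_map br. Proof. by case: H. Qed.
Lemma nlD i j x y : G i x -> G j y -> G (i + j)%N (br x y). Proof. by case: H => _ _ h _ _; apply: h. Qed.
Lemma nlA i j x y : G i x -> G j y -> br x y = - (sg K (i * j) *: br y x).
Proof. by case: H => _ _ _ h _; apply: h. Qed.
Lemma nlJ i j x y z : G i x -> G j y ->
  br x (br y z) = br (br x y) z + sg K (i * j) *: br y (br x z).
Proof. by case: H => _ _ _ _ h; apply: h. Qed.
End NL.

Lemma perm_antisym (K : fieldType) (A : lmodType K) (s : K) (a1 a2 a3 a4 b1 b2 b3 b4 : A) :
  a1 = -(s *: b2) -> a2 = -(s *: b1) -> a3 = s *: b4 -> a4 = s *: b3 ->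
  a1 + a2 + a3 - a4 = -(s *: (b1 + b2 + b3 - b4)).
Proof.
move=> -> -> -> ->; rewrite !scalerDr scalerN !opprD opprK.
by rewrite (ACl (2*1*4*3))%AC.
Qed.

Section MCons.
Variables (K : fieldType) (F T V : lmodType K).
Variables (brF : F -> F -> F) (GF : nat -> F -> Prop) (brT : T -> T -> T) (GT : nat -> T -> Prop).
Hypotheses (HF : is_neg_graded_Lie brF GF) (HT : is_neg_graded_Lie brT GT).
Variable pi : F -> T.
Hypotheses (pil : linear_map pi) (pib : forall x y, pi (brF x y) = brT (pi x) (pi y))
  (pid : forall i x, GF i x -> GT i (pi x)).
Variable rho : V -> T -> T.
Hypotheses (rhol : forall p, linear_map (rho p)) (rhop : forall X, linear_map (rho^~ X))
  (rhod : forall p X Y, rho p (brT X Y) = brT (rho p X) Y + brT X (rho p Y))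
  (rhog : forall p i X, GT i X -> GT i (rho p X)).
Variable S : F -> F.
Hypotheses (Sl : linear_map S) (Sh : forall i a, GF i a -> S a = sg K i *: a).

Local Notation s := (sg K).
Local Notation M := (F * T * V)%type.
Definition GM i (X : M) : Prop := [/\ GF i X.1.1, GT i.-1 X.1.2 & i <> 1%N -> X.2 = 0].
Definition brM (X Y : M) : M :=
  ((brF X.1.1 Y.1.1,
    brT X.1.2 (pi Y.1.1) + brT (pi (S X.1.1)) Y.1.2 + rho X.2 (pi Y.1.1) - rho Y.2 (pi (S X.1.1))),
   0).

Lemma Meq (X Y : M) : X.1.1 = Y.1.1 -> X.1.2 = Y.1.2 -> X.2 = Y.2 -> X = Y.
Proof. by case: X => [[? ?] ?]; case: Y => [[? ?] ?] /= -> -> ->. Qed.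

Lemma Msum1 I r (P : pred I) (E : I -> M) :
  (\sum_(i <- r | P i) E i).1.1 = \sum_(i <- r | P i) (E i).1.1.
Proof. exact: (big_morph (fun X : M => X.1.1) (fun _ _ => erefl) erefl). Qed.
Lemma Msum2 I r (P : pred I) (E : I -> M) :
  (\sum_(i <- r | P i) E i).1.2 = \sum_(i <- r | P i) (E i).1.2.
Proof. exact: (big_morph (fun X : M => X.1.2) (fun _ _ => erefl) erefl). Qed.
Lemma Msum3 I r (P : pred I) (E : I -> M) :
  (\sum_(i <- r | P i) E i).2 = \sum_(i <- r | P i) (E i).2.
Proof. exact: (big_morph (fun X : M => X.2) (fun _ _ => erefl) erefl). Qed.

Let GFg := nlG HF.
Let GTg := nlG HT.
Let BF := nlB HF.
Let BT := nlB HT.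

Lemma rho0 X : rho 0 X = 0. Proof. exact: (lm0 (rhop X)). Qed.

Lemma GM_grading : is_neg_grading GM.
Proof.
split.
- move=> i; split; first by split => //=; apply: G_0.
  move=> c X Y [ha hb hp] [ha' hb' hp']; split => /=.
  + by apply: ssC => //; apply: Gsub.
  + by apply: ssC => //; apply: Gsub.
  + by move=> h; rewrite hp // hp' // scaler0 addr0.
- move=> X [ha hb hp]; apply: Meq => /=; [exact: G0 ha | exact: G0 hb | exact: hp].
- move=> X; set a := X.1.1; set b := X.1.2.
  set N := (maxn (dn GFg a) (maxn (dn GTg b) 1)).+1.
  exists N, (fun k => ((gcomp GFg k a, if k == 0%N then 0 else gcomp GTg k.-1 b),
                  if k == 1%N then X.2 else 0)).
  split.
    move=> k; split => /=; first exact: gcomp_hom.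
      by case: eqP => _; [apply: G_0 | apply: gcomp_hom].
    by move=> hk; rewrite ifN //; apply/eqP.
  apply: Meq.
  + rewrite Msum1 /= -gcomp_sum //.
    by apply: leq_trans (leqnSn _); rewrite leq_maxl.
  + rewrite Msum2 big_ord_recl /= add0r -gcomp_sum //.
    by rewrite (leq_trans _ (leq_maxr _ _)) ?leq_maxl.
  + rewrite Msum3 /= sum_delta ifT //.
    by rewrite ltnS (leq_trans _ (leq_maxr _ _)) ?leq_maxr.
- move=> n Xs hX s0 i hi.
  have h1 : forall k, (k < n)%N -> (Xs k).1.1 = 0.
    case: GFg => _ _ _ u; apply: u; first by move=> k; case: (hX k).
    by rewrite -Msum1 s0.
  have h2 : forall k, (k < n)%N -> (Xs k).1.2 = 0.
    case: n hi hX s0 h1 => // n' _ hX s0 _.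
    have e0 : (Xs 0%N).1.2 = 0 by case: (hX 0%N) => _ h _; exact: G0 h.
    have s2 : \sum_(k < n') (Xs k.+1).1.2 = 0.
      by have := f_equal (fun X : M => X.1.2) s0; rewrite /= Msum2 big_ord_recl e0 add0r.
    move=> [|k] hk //.
    case: GTg => _ _ _ u; apply: (u n' (fun k => (Xs k.+1).1.2)) => //.
    by move=> m; case: (hX m.+1).
  have h3 : forall k, (k < n)%N -> (Xs k).2 = 0.
    move=> k hk; case: (eqVneq k 1%N) => [ek|ne]; last by case: (hX k) => _ _; apply; apply/eqP.
    rewrite ek in hk *.
    have := f_equal (fun X : M => X.2) s0; rewrite /= Msum3.
    rewrite (eq_bigr (fun j : 'I_n => if (j : nat) == 1%N then (Xs 1%N).2 else 0)).
      by rewrite sum_delta hk.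
    move=> j _; case: eqP => [->|ne'] //; by case: (hX j) => _ _; apply.
  by apply: Meq => /=; [apply: h1 | apply: h2 | apply: h3].
Qed.

Lemma brM_bil : bilinear_map brM.
Proof.
split.
- move=> c X X' Y; apply: Meq => /=.
  + by rewrite (brDl BF) (brZl BF).
  + rewrite Sl pil (brDl BT) (brZl BT) (brDl BT) (brZl BT) rhop (rhol Y.2) .
    rewrite !scalerDr scalerN !opprD !addrA.
    by rewrite (ACl (1*3*5*7*2*4*6*8))%AC.
  + by rewrite scaler0 addr0.
- move=> c X Y Y'; apply: Meq => /=.
  + by rewrite (brDr BF) (brZr BF).
  + rewrite pil (brDr BT) (brZr BT) (brDr BT) (brZr BT) (rhol X.2) rhop.
    rewrite !scalerDr scalerN !opprD !addrA.
    by rewrite (ACl (1*3*5*7*2*4*6*8))%AC.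
  + by rewrite scaler0 addr0.
Qed.

Lemma brM0l Y : brM 0 Y = 0. Proof. exact: (br0l brM_bil). Qed.
Lemma brM0r X : brM X 0 = 0. Proof. exact: (br0r brM_bil). Qed.
Lemma GM0 X : GM 0 X -> X = 0. Proof. exact: (G0 GM_grading). Qed.

Lemma brM_deg i j X Y : GM i X -> GM j Y -> GM (i + j) (brM X Y).
Proof.
case: i => [|i] hX; first by rewrite (GM0 hX) brM0l; split => /= //; apply: G_0.
case: j => [|j] hY; first by rewrite (GM0 hY) brM0r; split => /= //; apply: G_0.
case: X hX => [[a b] p] [/= ha hb hp]; case: Y hY => [[c e] q] [/= hc he hq].
split => /=.
- exact: (nlD HF ha hc).
- rewrite ?addSn /=; have sT := Gsub GTg (i + j.+1).
  apply: ssB => //; first (apply: ssD => //; first apply: ssD => //).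
  + exact (nlD HT hb (pid hc)).
  + rewrite (Sh ha) (lmZ pil) (brZl BT) -addSnnS; apply: (ssZ (Gsub GTg _)).
    exact (nlD HT (pid ha) he).
  + case: i hp {ha hb sT} => [|i] hp; first by apply: rhog; apply: pid.
    by rewrite hp // rho0; apply: (ss0 (Gsub GTg _)).
  + case: j hq {hc he sT} => [|j] hq; last by rewrite hq // rho0; apply: (ss0 (Gsub GTg _)).
    by rewrite addn1; apply: rhog; rewrite (Sh ha) (lmZ pil); apply: (ssZ (Gsub GTg _)); apply: pid.
- by [].
Qed.

Lemma sgM_S i j : s (i.+1 * j) = s j * s (i * j).
Proof. by rewrite mulSn sgD. Qed.
Lemma sgM_S' i j : s (i * j.+1) = s i * s (i * j).
Proof. by rewrite mulnS sgD. Qed.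

Lemma brM_anti i j X Y : GM i X -> GM j Y -> brM X Y = - (s (i * j) *: brM Y X).
Proof.
case: i => [|i] hX; first by rewrite (GM0 hX) brM0l brM0r scaler0 oppr0.
case: j => [|j] hY; first by rewrite (GM0 hY) brM0l brM0r scaler0 oppr0.
case: X hX => [[a b] p] [/= ha hb hp]; case: Y hY => [[c e] q] [/= hc he hq].
apply: Meq => /=.
- exact (nlA HF ha hc).
- rewrite (Sh ha) (Sh hc) !(lmZ pil).
  apply: perm_antisym.
  + rewrite (nlA HT hb (pid hc)) (brZl BT) scalerA; congr (- (_ *: _)).
    by rewrite sgM_S mulrC mulrA sgg mul1r.
  + by rewrite (brZl BT) (nlA HT (pid ha) he) scalerN scalerA sgM_S'.
  + rewrite (lmZ (rhol p)) scalerA.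
    case: i hp {ha hb} => [|i] hp; last by rewrite hp // !rho0 scaler0.
    by rewrite mul1n sgg scale1r.
  + rewrite (lmZ (rhol q)).
    case: j hq {hc he} => [|j] hq; last by rewrite hq // !rho0 !scaler0.
    by rewrite muln1.
- by rewrite scaler0 oppr0.
Qed.

Lemma brM_jac i j X Y Z : GM i X -> GM j Y ->
  brM X (brM Y Z) = brM (brM X Y) Z + s (i * j) *: brM Y (brM X Z).
Proof.
case: i => [|i] hX; first by rewrite (GM0 hX) !brM0l brM0r scaler0 addr0.
case: j => [|j] hY; first by rewrite (GM0 hY) !brM0l brM0r brM0l scaler0 addr0.
case: X hX => [[a b] p] [/= ha hb hp]; case: Y hY => [[c e] q] [/= hc he hq].
case: Z => [[f h] r].
apply: Meq => /=.
- exact (nlJ HF f ha hc).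
- rewrite (Sh ha) (Sh hc) (Sh (nlD HF ha hc)) !(lmZ pil) !pib !rho0 subr0.
  rewrite !(brDl BT, brDr BT, brZl BT, brZr BT, brNl BT, brNr BT, brBl BT, brBr BT, lmD (rhol _), lmZ (rhol _), lmN (rhol _), lmB (rhol _), rhod).
  have hA := pid ha; have hC := pid hc.
  set A := pi a in hA *; set C := pi c in hC *; set Fz := pi f.
  have E1 : brT b (brT C Fz) = brT (brT b C) Fz + s (i.+1 * j.+1) *: (s j.+1 *: brT C (brT b Fz)).
    by rewrite (nlJ HT _ hb hC) scalerA sgM_S mulrC mulrA sgg mul1r.
  have E2 : s i.+1 *: brT A (brT e Fz) = s i.+1 *: brT (brT A e) Fz + s (i.+1 * j.+1) *: brT e (brT A Fz).
    by rewrite (nlJ HT _ hA he) scalerDr scalerA -sgM_S'.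
  have E3 : s i.+1 *: (s j.+1 *: brT A (brT C h)) = s (i.+1 + j.+1) *: brT (brT A C) h +
       s (i.+1 * j.+1) *: (s j.+1 *: (s i.+1 *: brT C (brT A h))).
    rewrite (nlJ HT _ hA hC) !scalerDr !scalerA sgD; congr (_ + _ *: _).
    ring.
  have E4 : brT (rho p C) Fz + brT C (rho p Fz) = brT (rho p C) Fz + s (i.+1 * j.+1) *: (s j.+1 *: brT C (rho p Fz)).
    case: (eqVneq i 0%N) => [->|ne]; first by rewrite scalerA mul1n sgg scale1r.
    have -> : p = 0 by apply: hp; case: (i) ne.
    by rewrite !rho0 (br0l BT) (br0r BT) !scaler0.
  have E5 : s i.+1 *: brT A (rho q Fz) = - (s i.+1 *: brT (rho q A) Fz) + s (i.+1 * j.+1) *: (brT (rho q A) Fz + brT A (rho q Fz)).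
    case: (eqVneq j 0%N) => [->|ne]; first by rewrite muln1 scalerDr addKr.
    have -> : q = 0 by apply: hq; case: (j) ne.
    by rewrite !rho0 (br0l BT) (br0r BT) !(scaler0, addr0, add0r, oppr0).
  have E6 : s i.+1 *: - (s j.+1 *: brT A (rho r C)) = - (s (i.+1 + j.+1) *: (brT (rho r A) C + brT A (rho r C))) + s (i.+1 * j.+1) *: (s j.+1 *: - (s i.+1 *: brT C (rho r A))).
    rewrite (nlA HT hC (rhog r hA)) (mulnC j.+1) !scalerN opprK !scalerA !scalerDr opprD sgD.
    have -> : s (i.+1 * j.+1) * s j.+1 * s i.+1 * s (i.+1 * j.+1) = s i.+1 * s j.+1.
      by rewrite mulrC !mulrA sgg mul1r mulrC.
    by rewrite addrAC addNr add0r.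
  rewrite E1 E2 E3 E4 E5 E6 subr0 addr0 !scalerDr !opprD !addrA.
  by rewrite (ACl (1*3*13*7*5*10*11*4*2*6*14*12*8*9))%AC.
- by rewrite scaler0 addr0.
Qed.

Lemma brM_Lie : is_neg_graded_Lie brM GM.
Proof.
split.
- exact: GM_grading.
- exact: brM_bil.
- exact: brM_deg.
- exact: brM_anti.
- exact: brM_jac.
Qed.
End MCons.


Inductive GenDeg (K : fieldType) (V F : lmodType K) (brF : F -> F -> F) (iota : V -> F)
  : nat -> F -> Prop :=
| gd_iota v : GenDeg brF iota 1 (iota v)
| gd_br i j x y : GenDeg brF iota i x -> GenDeg brF iota j y -> GenDeg brF iota (i + j) (brF x y)
| gd_zero i : GenDeg brF iota i 0
| gd_comb i (c : K) x y : GenDeg brF iota i x -> GenDeg brF iota i y -> GenDeg brF iota i (c *: x + y).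

Section FreeUniq.
Variables (K : fieldType) (V F : lmodType K) (brF : F -> F -> F) (GF : nat -> F -> Prop) (iota : V -> F).
Hypothesis Hfree : is_free_graded_Lie brF GF iota.

Lemma free_Lie : is_neg_graded_Lie brF GF. Proof. by case: Hfree. Qed.
Lemma free_iota_lin : linear_map iota. Proof. by case: Hfree. Qed.
Lemma free_iota_deg v : GF 1 (iota v). Proof. by case: Hfree. Qed.

Lemma free_id (psi : F -> F) : graded_Lie_morphism brF GF brF GF psi ->
  (forall v, psi (iota v) = iota v) -> forall x, psi x = x.
Proof.
move=> hpsi hv x; case: Hfree => HL Hi Hd U.
have [phi [_ _ u]] := U F brF GF HL iota Hi Hd.
have e1 := u psi hpsi hv x.
have e2 : x = phi x by apply: (u id) => //; split.
by rewrite e1 -e2.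
Qed.

Lemma gd_sum i I r (P : pred I) (E : I -> F) :
  (forall k, P k -> GenDeg brF iota i (E k)) -> GenDeg brF iota i (\sum_(k <- r | P k) E k).
Proof.
move=> h; apply: big_ind => //; first exact: gd_zero.
by move=> x y hx hy; rewrite -[x]scale1r; apply: gd_comb.
Qed.

Lemma gd_G i x : GenDeg brF iota i x -> GF i x.
Proof.
have HL := free_Lie.
elim => {i x} [v|i j x y _ hx _ hy|i|i c x y _ hx _ hy].
- exact: free_iota_deg.
- exact: (nlD HL hx hy).
- exact: (G_0 (nlG HL)).
- by apply: ssC => //; apply: Gsub (nlG HL) _.
Qed.

Lemma gd_01 n x : GenDeg brF iota n x ->
  (n = 0%N -> x = 0) /\ (n = 1%N -> exists u, x = iota u).
Proof.
have HL := free_Lie; have Hi := free_iota_lin.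
elim => {n x} [v|i j x y _ [hx0 hx1] _ [hy0 hy1]|i|i c x y _ [hx0 hx1] _ [hy0 hy1]].
- by split => // _; exists v.
- split.
    by move/eqP; rewrite addn_eq0 => /andP [/eqP /hx0 -> _]; rewrite (br0l (nlB HL)).
  case: i hx0 hx1 => [|i] hx0 hx1.
    by rewrite add0n (hx0 erefl) (br0l (nlB HL)) => _; exists 0; rewrite (lm0 Hi).
  case: j hy0 hy1 => [|j] hy0 hy1.
    by rewrite (hy0 erefl) (br0r (nlB HL)) => _; exists 0; rewrite (lm0 Hi).
  by rewrite addSn addnS.
- by split => // _; exists 0; rewrite (lm0 Hi).
- split; first by move=> e; rewrite (hx0 e) (hy0 e) scaler0 addr0.
  move=> e; case: (hx1 e) => u ->; case: (hy1 e) => w ->.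
  by exists (c *: u + w); rewrite Hi.
Qed.

End FreeUniq.

Section Gen.
Variables (K : fieldType) (V F : lmodType K) (brF : F -> F -> F) (GF : nat -> F -> Prop) (iota : V -> F).
Hypothesis Hfree : is_free_graded_Lie brF GF iota.

Let HL := free_Lie Hfree.
Let BF := nlB HL.
Let GFg := nlG HL.
Local Notation GD := (GenDeg brF iota).

Definition Gen (x : F) := exists n xs, (forall i, GD i (xs i)) /\ x = \sum_(i < n) xs i.

Lemma Gen0 : Gen 0. Proof. by exists 0%N, (fun _ => 0); split; [move=> i; apply: gd_zero | rewrite big_ord0]. Qed.

Lemma GenC (c : K) x y : Gen x -> Gen y -> Gen (c *: x + y).
Proof.
move=> [n [xs [hx ex]]] [m [ys [hy ey]]].
exists (maxn n m), (fun k => c *: ext n xs k + ext m ys k); split.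
  move=> k; apply: gd_comb; rewrite /ext; case: ifP => _ //; apply: gd_zero.
by rewrite big_split /= -scaler_sumr ex ey -!sum_ext ?leq_maxl ?leq_maxr.
Qed.

Lemma GenD i x : GD i x -> Gen x.
Proof.
move=> h; exists i.+1, (fun k => if k == i then x else 0); split.
  by move=> k; case: eqP => [->|_] //; apply: gd_zero.
by rewrite sum_delta ltnSn.
Qed.

Lemma GenB x y : Gen x -> Gen y -> Gen (brF x y).
Proof.
move=> [n [xs [hx ex]]] [m [ys [hy ey]]].
exists (n + m)%N, (fun k => \sum_(i < n) \sum_(j < m) (if k == (i + j)%N then brF (xs i) (ys j) else 0)).
split.
  move=> k; apply: gd_sum => i _; apply: gd_sum => j _.
  by case: eqP => [->|_]; [apply: gd_br | apply: gd_zero].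
rewrite ex ey (lm_sum (bl_l BF _)).
under eq_bigr => i _ do rewrite (lm_sum (bl_r BF _)).
rewrite [RHS]exchange_big /=; apply: eq_bigr => i _.
rewrite [RHS]exchange_big /=; apply: eq_bigr => j _.
by rewrite sum_delta ifT // -addSn leq_add // ltnW.
Qed.

Definition genb (x : F) : bool := if excluded_middle_informative (Gen x) then true else false.
Lemma genbP x : reflect (Gen x) (genb x).
Proof. rewrite /genb; case: excluded_middle_informative => h; constructor => //. Qed.
Definition genp : {pred F} := fun x => genb x.
Lemma gen_closed : GRing.submod_closed genp.
Proof.
split; first by apply/genbP; exact: Gen0.
by move=> c u v /genbP hu /genbP hv; apply/genbP; apply: GenC.
Qed.
HB.instance Definition _ := GRing.isSubmodClosed.Build K F genp gen_closed.
Record SubF := MkSubF { sval : F; sprop : sval \in genp }.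
HB.instance Definition _ := [isSub for sval].
HB.instance Definition _ := [Choice of SubF by <:].
HB.instance Definition _ := [SubChoice_isSubLmodule of SubF by <:].

Lemma sval_lin : linear_map (sval : SubF -> F). Proof. by []. Qed.
Lemma sval_inj : injective (sval : SubF -> F). Proof. exact: val_inj. Qed.

Lemma sval_sum n (E : nat -> SubF) : sval (\sum_(i < n) E i) = \sum_(i < n) sval (E i).
Proof. exact: (lm_sum sval_lin). Qed.

Lemma br_in (x y : SubF) : brF (sval x) (sval y) \in genp.
Proof. apply/genbP; apply: GenB; apply/genbP; [exact: (sprop x) | exact: (sprop y)]. Qed.

Definition brS (x y : SubF) : SubF := MkSubF (br_in x y).
Definition GS i (x : SubF) := GD i (sval x).
Lemma svalB x y : sval (brS x y) = brF (sval x) (sval y). Proof. by []. Qed.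

Lemma GD_in i x : GD i x -> x \in genp.
Proof. by move=> h; apply/genbP; apply: GenD h. Qed.

Lemma HS : is_neg_graded_Lie brS GS.
Proof.
split.
- split.
  + move=> i; split; first by rewrite /GS (lm0 sval_lin); apply: gd_zero.
    by move=> c x y hx hy; rewrite /GS sval_lin; apply: gd_comb.
  + move=> x hx; apply: sval_inj; rewrite (lm0 sval_lin).
    by case: (gd_01 Hfree hx) => h _; apply: h.
  + move=> x; have /genbP [n [xs [hx ex]]] := sprop x.
    exists n, (fun i => MkSubF (GD_in (hx i))); split => // .
    by apply: sval_inj; rewrite (lm_sum sval_lin) ex.
  + move=> n xs hx s0 i hi; apply: sval_inj; rewrite (lm0 sval_lin).
    case: GFg => _ _ _ u; apply: (u n (fun k => sval (xs k))) => //.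
      by move=> k; apply: (gd_G Hfree); apply: hx.
    by rewrite -sval_sum s0 (lm0 sval_lin).
- split=> c x x' y; apply: sval_inj; rewrite sval_lin !svalB sval_lin.
    exact: (bl_l BF (sval y)).
  exact: (bl_r BF (sval x)).
- by move=> i j x y hx hy; rewrite /GS /=; apply: gd_br.
- move=> i j x y hx hy; apply: sval_inj; rewrite (lmN sval_lin) (lmZ sval_lin) !svalB.
  exact: (nlA HL (gd_G Hfree hx) (gd_G Hfree hy)).
- move=> i j x y z hx hy; apply: sval_inj; rewrite (lmD sval_lin) (lmZ sval_lin) !svalB.
  exact: (nlJ HL _ (gd_G Hfree hx) (gd_G Hfree hy)).
Qed.

Lemma gen_all i x : GF i x -> GD i x.
Proof.
case: Hfree => _ Hi Hd U.
pose f v : SubF := MkSubF (GD_in (gd_iota brF iota v)).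
have hf : linear_map f by move=> c v w; apply: sval_inj; rewrite sval_lin /= Hi.
have hfd : forall v, GS 1 (f v) by move=> v; apply: gd_iota.
have [psi [[pl pb pd] pv _]] := U SubF brS GS HS f hf hfd.
have e : forall y, sval (psi y) = y.
  apply: (free_id Hfree).
    split; first exact: (lm_comp pl sval_lin).
      by move=> y z; rewrite pb.
    by move=> k y hy; apply: (gd_G Hfree); apply: pd.
  by move=> v; rewrite pv.
by move=> hx; rewrite -(e x); apply: pd.
Qed.

End Gen.


Section Main.
Variables (K : fieldType) (char0 : [pchar K] =i pred0).
Variables (g V : lmodType K) (brg : g -> g -> g) (act : g -> V -> V)
  (circ : V -> V -> V) (Theta : V -> g).
Hypothesis HLL : is_Lie_Leibniz_triple brg act circ Theta.
Variables (F : lmodType K) (brF : F -> F -> F) (GF : nat -> F -> Prop) (iota : V -> F).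
Hypothesis Hfree : is_free_graded_Lie brF GF iota.
Variable rhoF : g -> F -> F.
Hypothesis HrhoF : derivation_extension act brF GF iota rhoF.
Variables (T : lmodType K) (brT : T -> T -> T) (GT : nat -> T -> Prop).
Hypothesis HT : is_neg_graded_Lie brT GT.
Variable pi : F -> T.
Hypothesis Hpi : is_graded_quotient brF GF brT GT pi (Kbullet circ brF GF iota rhoF).
Variable rhoT : g -> T -> T.
Hypothesis HrhoT : forall a x, pi (rhoF a x) = rhoT a (pi x).

Local Notation s := (sg K).
Local Notation GD := (GenDeg brF iota).
Let HF := free_Lie Hfree.
Let BF := nlB HF.
Let GFg := nlG HF.
Let BT := nlB HT.
Let GTg := nlG HT.
Let Hi : linear_map iota := free_iota_lin Hfree.

Lemma two_neq0 : (2 : K) != 0.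
Proof. by rewrite ((GRing.pcharf0P K).1 char0 2). Qed.

Lemma Bg : bilinear_map brg. Proof. by case: HLL => [[]]. Qed.
Lemma g_alt a : brg a a = 0. Proof. by case: HLL => [[_ []]]. Qed.
Lemma Ba : bilinear_map act. Proof. by case: HLL => _ [[]]. Qed.
Lemma act_mod a b x : act (brg a b) x = act a (act b x) - act b (act a x).
Proof. by case: HLL => _ [[_ h] _]; apply: h. Qed.
Lemma Bc : bilinear_map circ. Proof. by case: HLL => _ [_ [[]]]. Qed.
Lemma leib x y z : circ x (circ y z) = circ (circ x y) z + circ y (circ x z).
Proof. by case: HLL => _ [_ [[_ h] _]]; apply: h. Qed.
Lemma ThL : linear_map Theta. Proof. by case: HLL => _ [_ [_ []]]. Qed.
Lemma circ_act x y : circ x y = act (Theta x) y.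
Proof. by case: HLL => _ [_ [_ [_ []]]]. Qed.
Lemma Th_circ x y : Theta (circ x y) = brg (Theta x) (Theta y).
Proof. by case: HLL => _ [_ [_ [_ [_ h]]]]. Qed.

Lemma g_anti a b : brg a b = - brg b a.
Proof.
have := g_alt (a + b); rewrite (brDl Bg) !(brDr Bg) !g_alt add0r addr0.
by move/eqP; rewrite addr_eq0 => /eqP.
Qed.

Lemma Th_sym u v : Theta (circ u v + circ v u) = 0.
Proof. by rewrite (lmD ThL) !Th_circ (g_anti (Theta v)) addrN. Qed.

Lemma pi_lin : linear_map pi. Proof. by case: Hpi => [[]]. Qed.
Lemma pi_br x y : pi (brF x y) = brT (pi x) (pi y). Proof. by case: Hpi => [[]]. Qed.
Lemma pi_deg i x : GF i x -> GT i (pi x). Proof. by move=> hx; case: Hpi => [[_ _ h] _ _]; exact: (h i x hx). Qed.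
Lemma pi_surj t : exists x, pi x = t. Proof. by case: Hpi. Qed.
Lemma pi_ker x : pi x = 0 <-> Kbullet circ brF GF iota rhoF x. Proof. by case: Hpi. Qed.

Lemma pi_lift i t : GT i t -> exists x, GF i x /\ pi x = t.
Proof. exact: (lift_hom GFg GTg pi_lin pi_deg pi_surj). Qed.

Lemma F_ind (P : F -> Prop) : P 0 -> (forall c x y, P x -> P y -> P (c *: x + y)) ->
  (forall v, P (iota v)) ->
  (forall i j x y, GD i x -> GD j y -> P x -> P y -> P (brF x y)) -> forall x, P x.
Proof.
move=> P0 PC Pi Pb.
have hgd : forall n x, GD n x -> P x.
  move=> n x; elim => {n x} [v|i j x y hx IHx hy IHy|i|i c x y _ hx _ hy]; [exact: Pi | exact: (Pb i j x y hx hy IHx IHy) | exact: P0 | exact: PC].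
move=> x; rewrite (gcomp_sum (leqnn (dn GFg x))).
apply: big_ind => //; first by move=> a b ha hb; rewrite -[a]scale1r; apply: PC.
move=> i _; apply: (hgd i); apply: (gen_all Hfree); apply: gcomp_hom.
Qed.

Lemma rF_lin a : linear_map (rhoF a). Proof. by case: (HrhoF a). Qed.
Lemma rF_der a x y : rhoF a (brF x y) = brF (rhoF a x) y + brF x (rhoF a y).
Proof. by case: (HrhoF a). Qed.
Lemma rF_deg a i x : GF i x -> GF i (rhoF a x). Proof. by case: (HrhoF a) => _ _ h _; apply: h. Qed.
Lemma rF_iota a v : rhoF a (iota v) = iota (act a v). Proof. by case: (HrhoF a). Qed.

Lemma rF_linA x c a b : rhoF (c *: a + b) x = c *: rhoF a x + rhoF b x.
Proof.
move: x; apply: F_ind.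
- by rewrite !(lm0 (rF_lin _)) scaler0 addr0.
- move=> c' x y hx hy; rewrite !rF_lin hx hy !scalerDr !scalerA mulrC !addrA.
  by rewrite (ACl (1*3*2*4))%AC.
- by move=> v; rewrite !rF_iota (bl_l Ba) Hi.
- move=> i j x y _ _ hx hy; rewrite !rF_der hx hy (brDl BF) (brZl BF) (brDr BF) (brZr BF).
  by rewrite scalerDr !addrA (ACl (1*3*2*4))%AC.
Qed.

Lemma rF_mod a b x : rhoF (brg a b) x = rhoF a (rhoF b x) - rhoF b (rhoF a x).
Proof.
move: x; apply: F_ind.
- by rewrite !(lm0 (rF_lin _)) subr0.
- move=> c x y hx hy; rewrite !rF_lin hx hy scalerBr opprD !addrA.
  by rewrite (ACl (1*3*2*4))%AC.
- by move=> v; rewrite !rF_iota act_mod (lmB Hi).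
- move=> i j x y _ _ hx hy; rewrite !rF_der !(lmD (rF_lin _)) !rF_der hx hy !(brBl BF) !(brBr BF).
  rewrite !opprD !addrA.
  by rewrite [RHS](ACl (1*5*4*8*2*7*3*6))%AC /= !addrK.
Qed.

Lemma rT_pi a x : rhoT a (pi x) = pi (rhoF a x). Proof. by rewrite HrhoT. Qed.

Lemma rT_lin a : linear_map (rhoT a).
Proof.
move=> c X Y; case: (pi_surj X) => x <-; case: (pi_surj Y) => y <-.
by rewrite -pi_lin !rT_pi rF_lin pi_lin.
Qed.

Lemma rT_linA X c a b : rhoT (c *: a + b) X = c *: rhoT a X + rhoT b X.
Proof. by case: (pi_surj X) => x <-; rewrite !rT_pi rF_linA pi_lin. Qed.

Lemma rT_der a X Y : rhoT a (brT X Y) = brT (rhoT a X) Y + brT X (rhoT a Y).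
Proof.
case: (pi_surj X) => x <-; case: (pi_surj Y) => y <-.
by rewrite -pi_br !rT_pi rF_der (lmD pi_lin) !pi_br.
Qed.

Lemma rT_deg a i X : GT i X -> GT i (rhoT a X).
Proof. by move=> /pi_lift [x [hx <-]]; rewrite rT_pi; apply: pi_deg; apply: rF_deg. Qed.

Lemma rT_mod a b X : rhoT (brg a b) X = rhoT a (rhoT b X) - rhoT b (rhoT a X).
Proof. by case: (pi_surj X) => x <-; rewrite !rT_pi rF_mod (lmB pi_lin). Qed.

Lemma rT_iota a v : rhoT a (pi (iota v)) = pi (iota (act a v)).
Proof. by rewrite rT_pi rF_iota. Qed.

Lemma rT0 a : rhoT a 0 = 0. Proof. exact: (lm0 (rT_lin a)). Qed.

Definition rho (p : V) := rhoT (Theta p).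
Lemma rhol p : linear_map (rho p). Proof. exact: rT_lin. Qed.
Lemma rhop X : linear_map (rho^~ X). Proof. by move=> c p q; rewrite /rho ThL rT_linA. Qed.
Lemma rhod p X Y : rho p (brT X Y) = brT (rho p X) Y + brT X (rho p Y). Proof. exact: rT_der. Qed.
Lemma rho_0 X : rho 0 X = 0. Proof. exact: (lm0 (rhop X)). Qed.
Lemma rhog p i X : GT i X -> GT i (rho p X). Proof. exact: rT_deg. Qed.

Definition S := sgn GFg.
Lemma S_lin : linear_map S. Proof. exact: sgn_lin. Qed.
Lemma S_hom i a : GF i a -> S a = s i *: a. Proof. exact: sgn_hom. Qed.

Let HM := brM_Lie HF HT pi_lin pi_br pi_deg rhol rhop rhod rhog S_lin S_hom.
Local Notation M := (F * T * V)%type.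
Definition fM (v : V) : M := ((iota v, 0), v).
Lemma fM_lin : linear_map fM.
Proof. by move=> c v w; apply: Meq => /=; rewrite ?Hi ?scaler0 ?addr0. Qed.
Lemma fM_deg v : GM GF GT 1 (fM v).
Proof. split => //=; [exact: (free_iota_deg Hfree v) | exact: (G_0 GTg 0)]. Qed.

Lemma phi_ex : exists phi : F -> M,
  [/\ graded_Lie_morphism brF GF (brM brF brT pi rho S) (GM GF GT) phi,
      (forall v, phi (iota v) = fM v) &
      (forall psi : F -> M, graded_Lie_morphism brF GF (brM brF brT pi rho S) (GM GF GT) psi ->
         (forall v, psi (iota v) = fM v) -> forall x, psi x = phi x)].
Proof. by case: Hfree => _ _ _ U; apply: U; [exact: HM | exact: fM_lin | exact: fM_deg]. Qed.

Definition phiM := proj1_sig (constructive_indefinite_description _ phi_ex).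
Lemma phiM_spec :
  [/\ graded_Lie_morphism brF GF (brM brF brT pi rho S) (GM GF GT) phiM,
      (forall v, phiM (iota v) = fM v) &
      (forall psi : F -> M, graded_Lie_morphism brF GF (brM brF brT pi rho S) (GM GF GT) psi ->
         (forall v, psi (iota v) = fM v) -> forall x, psi x = phiM x)].
Proof. exact: (proj2_sig (constructive_indefinite_description _ phi_ex)). Qed.

Lemma phi_lin : linear_map phiM. Proof. by case: phiM_spec => [[]]. Qed.
Lemma phi_br x y : phiM (brF x y) = brM brF brT pi rho S (phiM x) (phiM y).
Proof. by case: phiM_spec => [[]]. Qed.
Lemma phi_deg i x : GF i x -> GM GF GT i (phiM x).
Proof. by move=> hx; case: phiM_spec => [[_ _ h] _ _]; exact: (h i x hx). Qed.
Lemma phi_iota v : phiM (iota v) = fM v. Proof. by case: phiM_spec. Qed.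

Lemma phi1 x : (phiM x).1.1 = x.
Proof.
apply: (free_id Hfree (psi := fun x => (phiM x).1.1)); last by move=> v; rewrite phi_iota.
split.
- by move=> c y z; rewrite phi_lin.
- by move=> y z; rewrite phi_br.
- by move=> i y hy; case: (phi_deg hy).
Qed.

Definition D x := (phiM x).1.2.
Definition P x := (phiM x).2.
Lemma D_lin : linear_map D. Proof. by move=> c x y; rewrite /D phi_lin. Qed.
Lemma P_lin : linear_map P. Proof. by move=> c x y; rewrite /P phi_lin. Qed.
Lemma D_iota v : D (iota v) = 0. Proof. by rewrite /D phi_iota. Qed.
Lemma P_iota v : P (iota v) = v. Proof. by rewrite /P phi_iota. Qed.
Lemma D_br x y : D (brF x y) =
  brT (D x) (pi y) + brT (pi (S x)) (D y) + rho (P x) (pi y) - rho (P y) (pi (S x)).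
Proof. by rewrite /D /P phi_br /= !phi1. Qed.
Lemma D_deg i x : GF i x -> GT i.-1 (D x). Proof. by move=> hx; case: (phi_deg hx). Qed.
Lemma P_deg i x : GF i x -> i <> 1%N -> P x = 0. Proof. by move=> hx; case: (phi_deg hx). Qed.

Lemma S_iota u : S (iota u) = - iota u.
Proof. by rewrite (S_hom (free_iota_deg Hfree u)) sg1 scaleN1r. Qed.

Lemma D_ii u v : D (brF (iota u) (iota v)) = pi (iota (circ u v + circ v u)).
Proof.
rewrite D_br !D_iota (br0l BT) (br0r BT) !P_iota S_iota add0r (lmN pi_lin).
by rewrite add0r /rho (lmN (rT_lin _)) !rT_iota -!circ_act opprK (lmD Hi) (lmD pi_lin).
Qed.

Lemma D_iy u i y : GF i y -> (2 <= i)%N ->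
  D (brF (iota u) y) = rho u (pi y) - brT (pi (iota u)) (D y).
Proof.
move=> hy hi; rewrite D_br D_iota (br0l BT) add0r S_iota (lmN pi_lin) (brNl BT) P_iota.
rewrite (P_deg hy); last by move=> e; rewrite e in hi.
by rewrite rho_0 subr0 addrC.
Qed.

Lemma D_xy i j x y : GF i x -> GF j y -> (2 <= i)%N -> (2 <= j)%N ->
  D (brF x y) = brT (D x) (pi y) + s i *: brT (pi x) (D y).
Proof.
move=> hx hy hi hj; rewrite D_br (S_hom hx) (lmZ pi_lin) (brZl BT).
rewrite (P_deg hx); last by move=> e; rewrite e in hi.
rewrite (P_deg hy); last by move=> e; rewrite e in hj.
by rewrite !rho_0 subr0 addr0.
Qed.

Local Notation Kd := (Kdeg circ brF GF iota rhoF).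
Local Notation Kb := (Kbullet circ brF GF iota rhoF).

Lemma two_sym u v : circ u v + circ v u = 2 *: sym_bracket circ u v.
Proof. by rewrite /sym_bracket scalerA mulfV ?two_neq0 // scale1r. Qed.

Lemma Kd_ge2 i k : Kd i k -> (2 <= i)%N.
Proof.
elim => {i k} [x _|j m f k _ hm _ _ _|i hi|i c x y hi _ _ _ _].
- by [].
- by rewrite (leq_trans hm) ?leq_addl.
- exact: ltnW.
- exact: ltnW.
Qed.

Lemma Kd_G i k : Kd i k -> GF i k.
Proof.
elim => {i k} [x hx|j m f k _ _ hf _ hk|i _|i c x y _ _ hx _ hy].
- by case: hx => W [_ _ hW hWx]; case: (hW _ hWx).
- exact: (nlD HF hf hk).
- exact: (G_0 GFg).
- by apply: ssC => //; apply: Gsub GFg _.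
Qed.

Lemma K2_0 : K2 circ brF GF iota rhoF 0.
Proof.
exists (fun w => w = 0); split => //.
- by split => // c x y -> ->; rewrite scaler0 addr0.
- by move=> a w ->; exact: (lm0 (rF_lin a)).
- move=> w ->; split; first exact: (G_0 GFg).
  by exists 0%N, (fun _ => 0), (fun _ => 0), (fun _ => 0); rewrite !big_ord0.
Qed.

Lemma Kd0 i : (2 <= i)%N -> Kd i 0.
Proof.
move=> hi; case: (eqVneq i 2%N) => [->|ne]; first by apply: Kdeg_two; exact: K2_0.
by apply: Kdeg_zero; rewrite ltn_neqAle eq_sym ne.
Qed.

Lemma Kd_Kb i k : Kd i k -> Kb k.
Proof.
move=> hk; have hi := Kd_ge2 hk.
exists i.+1, (fun j => if j == i then k else 0); split.
  by move=> j hj; case: eqP => [->|_] //; apply: Kd0.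
rewrite big_nat_recr //= eqxx big_nat_cond big1 ?add0r // => j /andP [/andP [_ hj] _].
by rewrite ifN // ltn_eqF.
Qed.

Lemma Kd_pi i k : Kd i k -> pi k = 0.
Proof. by move=> hk; apply/pi_ker; apply: Kd_Kb hk. Qed.

Lemma D_K i k : Kd i k -> D k = 0.
Proof.
elim => {i k} [x hx|j m f k hj hm hf hk IH|i hi|i c x y hi _ IHx _ IHy].
- case: hx => W [_ _ hW hWx]; case: (hW _ hWx) => _ [n [c [xs [ys [-> es]]]]].
  rewrite (lm_sum D_lin).
  transitivity (pi (iota (2 *: \sum_(k < n) c k *: sym_bracket circ (xs k) (ys k)))).
    rewrite scaler_sumr (lm_sum Hi) (lm_sum pi_lin); apply: eq_bigr => k _.
    by rewrite (lmZ D_lin) D_ii scalerA mulrC -scalerA -two_sym (lmZ Hi) (lmZ pi_lin).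
  by rewrite es scaler0 (lm0 Hi) (lm0 pi_lin).
- rewrite D_br (Kd_pi hk) IH !(br0r BT) (lm0 (rhol _)).
  rewrite (P_deg (Kd_G hk)); last by move=> e; rewrite e in hm.
  by rewrite rho_0 !addr0 subr0.
- exact: (lm0 D_lin).
- by rewrite D_lin IHx IHy scaler0 addr0.
Qed.

Lemma D_Kb x : Kb x -> D x = 0.
Proof.
case=> n [xs [hxs ->]]; rewrite (lm_sum D_lin) big1_seq // => i /andP [_].
by rewrite mem_index_iota => /andP [hi _]; exact: (D_K (hxs i hi)).
Qed.

Definition lift (t : T) : F := proj1_sig (constructive_indefinite_description _ (pi_surj t)).
Lemma lift_pi t : pi (lift t) = t.
Proof. exact: (proj2_sig (constructive_indefinite_description _ (pi_surj t))). Qed.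
Definition d (t : T) : T := D (lift t).

Lemma d_pi x : d (pi x) = D x.
Proof.
have : pi (lift (pi x) - x) = 0 by rewrite (lmB pi_lin) lift_pi subrr.
move/pi_ker/D_Kb; rewrite (lmB D_lin) => /eqP; rewrite subr_eq0 => /eqP.
by rewrite /d.
Qed.

Local Notation tau := (fun v => pi (iota v)).

Lemma d_lin : linear_map d.
Proof.
move=> c X Y; case: (pi_surj X) => x <-; case: (pi_surj Y) => y <-.
by rewrite -pi_lin !d_pi D_lin.
Qed.

Lemma d_T1 X : GT 1 X -> d X = 0.
Proof. by move=> /pi_lift [x [hx <-]]; rewrite d_pi; apply: (G0 GTg); apply: (D_deg hx). Qed.

Lemma d_deg i X : (1 <= i)%N -> GT i.+1 X -> GT i (d X).
Proof. by move=> _ /pi_lift [x [hx <-]]; rewrite d_pi; apply: (D_deg hx). Qed.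

Lemma d_ii u v : d (brT (tau u) (tau v)) = tau ((2 : K) *: sym_bracket circ u v).
Proof. by rewrite /= -pi_br d_pi D_ii two_sym. Qed.

Lemma d_iy u i X : (2 <= i)%N -> GT i X ->
  d (brT (tau u) X) = rhoT (Theta u) X - brT (tau u) (d X).
Proof.
move=> hi /pi_lift [y [hy <-]].
by rewrite /= -pi_br !d_pi (D_iy u hy hi).
Qed.

Lemma d_xy i j X Y : (2 <= i)%N -> (2 <= j)%N -> GT i X -> GT j Y ->
  d (brT X Y) = brT (d X) Y + s i *: brT X (d Y).
Proof.
move=> hi hj /pi_lift [x [hx <-]] /pi_lift [y [hy <-]].
by rewrite -pi_br !d_pi (D_xy hx hy hi hj).
Qed.

Lemma GD_T i x : GD i x -> GT i (pi x).
Proof. by move=> h; apply: pi_deg; apply: (gd_G Hfree h). Qed.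

Lemma T_ind (Q : T -> Prop) : Q 0 -> (forall c X Y, Q X -> Q Y -> Q (c *: X + Y)) ->
  (forall v, Q (tau v)) ->
  (forall i j x y, GD i x -> GD j y -> Q (pi x) -> Q (pi y) -> Q (brT (pi x) (pi y))) ->
  forall t, Q t.
Proof.
move=> Q0 QC Qi Qb t; case: (pi_surj t) => x <-; move: x.
apply: F_ind.
- by rewrite (lm0 pi_lin).
- by move=> c x y hx hy; rewrite pi_lin; apply: QC.
- exact: Qi.
- by move=> i j x y hx hy h1 h2 /=; rewrite pi_br; exact: (Qb i j x y hx hy h1 h2).
Qed.

Lemma GD0 x : GD 0 x -> x = 0. Proof. by case/(gd_01 Hfree) => h _; apply: h. Qed.
Lemma GD1 x : GD 1 x -> exists u, x = iota u. Proof. by case/(gd_01 Hfree) => _ h; apply: h. Qed.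

Lemma T1_tau X : GT 1 X -> exists u, X = tau u.
Proof.
move=> /pi_lift [x [hx <-]]; case: (GD1 (gen_all Hfree hx)) => u ->.
by exists u.
Qed.

Lemma tau_T1 v : GT 1 (tau v). Proof. exact: pi_deg (free_iota_deg Hfree v). Qed.

Lemma d_tau v : d (tau v) = 0. Proof. exact: d_T1 (tau_T1 v). Qed.

Lemma d_ii' u v : d (brT (tau u) (tau v)) = tau (circ u v + circ v u).
Proof. by rewrite /= -pi_br d_pi D_ii. Qed.

Lemma D2 n x : GD n x -> n = 2%N -> exists w, D x = tau w /\ Theta w = 0.
Proof.
elim => {n x} [v|i j x y hx _ hy _|i|i c x y _ IHx _ IHy] //.
- case: i hx => [|[|i]] hx.
  + by rewrite (GD0 hx) (br0l BF) (lm0 D_lin) => _; exists 0; rewrite (lm0 Hi) (lm0 pi_lin) (lm0 ThL).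
  + case: j hy => [|[|j]] hy // _.
    case: (GD1 hx) => u ->; case: (GD1 hy) => v ->.
    by exists (circ u v + circ v u); rewrite D_ii Th_sym.
  + case: j hy => [|j] hy; last by rewrite !addnS.
    by rewrite (GD0 hy) (br0r BF) (lm0 D_lin) => _; exists 0; rewrite (lm0 Hi) (lm0 pi_lin) (lm0 ThL).
- by move=> _; exists 0; rewrite (lm0 D_lin) (lm0 Hi) (lm0 pi_lin) (lm0 ThL).
- move=> e; case: (IHx e) => w1 [e1 t1]; case: (IHy e) => w2 [e2 t2].
  by exists (c *: w1 + w2); rewrite D_lin e1 e2 Hi pi_lin ThL t1 t2 scaler0 addr0.
Qed.

Lemma T2_w X : GT 2 X -> exists w, d X = tau w /\ Theta w = 0.
Proof.
move=> /pi_lift [x [hx <-]]; rewrite d_pi.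
exact: (D2 (gen_all Hfree hx)).
Qed.

Lemma rT_Th0 w X : Theta w = 0 -> rhoT (Theta w) X = 0.
Proof. by move=> ->; have := rT_linA X (-1) 0 0; rewrite scaler0 addr0 scaleN1r addNr. Qed.

Section Equiv.
Variable w : V.
Local Notation a := (Theta w).
Local Notation Q := (fun X => d (rhoT a X) = rhoT a (d X)).

Lemma rT_tau v : rhoT a (tau v) = tau (circ w v).
Proof. by rewrite /= rT_iota circ_act. Qed.

Lemma eq_iY u j Y : (2 <= j)%N -> GT j Y -> Q Y -> Q (brT (tau u) Y).
Proof.
move=> hj hY IH; simpl in IH; rewrite /=.
have hY' : GT j (rhoT a Y) by apply: rT_deg.
rewrite rT_der rT_tau (lmD d_lin) (d_iy _ hj hY) (d_iy _ hj hY') (d_iy u hj hY) IH.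
rewrite (lmB (rT_lin _)) rT_der rT_tau Th_circ rT_mod.
rewrite !opprD !addrA.
by rewrite (ACl (1*3*5*4*2))%AC /= addrK.
Qed.

Lemma d_equiv X : d (rhoT a X) = rhoT a (d X).
Proof.
move: X; apply: T_ind.
- by rewrite rT0 (lm0 d_lin) rT0.
- move=> c X Y hX hY; simpl in hX, hY.
  by rewrite (rT_lin _) d_lin hX hY d_lin (rT_lin _).
- by move=> v; rewrite rT_tau !d_tau rT0.
- move=> i j x y hx hy IHx IHy; simpl in IHx, IHy.
  have hX := GD_T hx; have hY := GD_T hy.
  case: i hx hX IHx => [|[|i]] hx hX IHx.
  + by rewrite (GD0 hx) (lm0 pi_lin) (br0l BT) rT0 (lm0 d_lin) rT0.
  + case: (GD1 hx) => u ex; rewrite ex in hX IHx *.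
    case: j hy hY IHy => [|[|j]] hy hY IHy.
    * by rewrite (GD0 hy) (lm0 pi_lin) (br0r BT) rT0 (lm0 d_lin) rT0.
    * case: (GD1 hy) => v ->.
      rewrite rT_der !rT_tau (lmD d_lin) !d_ii' rT_tau -(lmD pi_lin) -(lmD Hi).
      rewrite (brDr Bc) (leib w u v) (leib w v u) !addrA.
      by rewrite (ACl (1*3*4*2))%AC.
    * exact: (eq_iY u (isT : (2 <= j.+2)%N) hY IHy).
  + case: j hy hY IHy => [|[|j]] hy hY IHy.
    * by rewrite (GD0 hy) (lm0 pi_lin) (br0r BT) rT0 (lm0 d_lin) rT0.
    * case: (GD1 hy) => v ey; rewrite ey in hY *.
      have := eq_iY v (isT : (2 <= i.+2)%N) hX IHx; rewrite /= => E.
      rewrite (nlA HT hX hY) (lmN (rT_lin _)) (lmZ (rT_lin _)) (lmN d_lin) (lmZ d_lin) E.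
      by rewrite (lmN d_lin) (lmZ d_lin) (lmN (rT_lin _)) (lmZ (rT_lin _)).
    * have hX' := rT_deg a hX; have hY' := rT_deg a hY.
      rewrite rT_der (lmD d_lin) (d_xy _ _ hX' hY) // (d_xy _ _ hX hY') // (d_xy _ _ hX hY) //.
      rewrite IHx IHy (lmD (rT_lin _)) (lmZ (rT_lin _)) !rT_der scalerDr !addrA.
      by rewrite (ACl (1*3*2*4))%AC.
Qed.
End Equiv.

Section Uniq.
Variable d' : T -> T.
Hypothesis Hd' : is_tower_differential circ Theta brT GT tau rhoT d'.
Lemma tw_lin : linear_map d'. Proof. by case: Hd'. Qed.
Lemma tw_T1 X : GT 1 X -> d' X = 0. Proof. by case: Hd' => _ [h _]; apply: h. Qed.
Lemma tw_ii u v : d' (brT (tau u) (tau v)) = tau ((2 : K) *: sym_bracket circ u v).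
Proof. by case: Hd' => _ [_ [_ [_ [h _]]]]; apply: h. Qed.
Lemma tw_iy u i X : (2 <= i)%N -> GT i X ->
  d' (brT (tau u) X) = rhoT (Theta u) X - brT (tau u) (d' X).
Proof. by case: Hd' => _ [_ [_ [_ [_ [h _]]]]]; apply: h. Qed.
Lemma tw_xy i j X Y : (2 <= i)%N -> (2 <= j)%N -> GT i X -> GT j Y ->
  d' (brT X Y) = brT (d' X) Y + s i *: brT X (d' Y).
Proof. by case: Hd' => _ [_ [_ [_ [_ [_ h]]]]]; apply: h. Qed.

Lemma uniq_d X : d' X = d X.
Proof.
move: X; apply: T_ind.
- by rewrite (lm0 tw_lin) (lm0 d_lin).
- by move=> c X Y hX hY; rewrite tw_lin d_lin hX hY.
- by move=> v; rewrite tw_T1 ?d_tau //; apply: tau_T1.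
- move=> i j x y hx hy IHx IHy.
  have hX := GD_T hx; have hY := GD_T hy.
  case: i hx hX IHx => [|[|i]] hx hX IHx.
  + by rewrite (GD0 hx) (lm0 pi_lin) (br0l BT) (lm0 d_lin) (lm0 tw_lin).
  + case: (GD1 hx) => u ex; rewrite ex in hX IHx *.
    case: j hy hY IHy => [|[|j]] hy hY IHy.
    * by rewrite (GD0 hy) (lm0 pi_lin) (br0r BT) (lm0 d_lin) (lm0 tw_lin).
    * by case: (GD1 hy) => v ->; rewrite tw_ii d_ii.
    * by rewrite (tw_iy u _ hY) // (d_iy u _ hY) // IHy.
  + case: j hy hY IHy => [|[|j]] hy hY IHy.
    * by rewrite (GD0 hy) (lm0 pi_lin) (br0r BT) (lm0 d_lin) (lm0 tw_lin).
    * case: (GD1 hy) => v ey; rewrite ey in hY *.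
      rewrite (nlA HT hX hY) (lmN tw_lin) (lmZ tw_lin) (lmN d_lin) (lmZ d_lin).
      by rewrite (tw_iy v _ hX) // (d_iy v _ hX) // IHx.
    * by rewrite (tw_xy _ _ hX hY) // (d_xy _ _ hX hY) // IHx IHy.
Qed.
End Uniq.

Lemma dd_iY u j Y : (2 <= j)%N -> GT j Y -> d (d Y) = 0 -> d (d (brT (tau u) Y)) = 0.
Proof.
move=> hj hY IH.
rewrite (d_iy u hj hY) (lmB d_lin) d_equiv.
case: j hj hY => [|[|j]] // _ hY.
case: j hY => [|j] hY.
- have [w' [e hw]] := T2_w hY.
  rewrite e d_ii' rT_iota -circ_act (circ_act w' u) hw (br0l Ba).
  idtac.
  by rewrite addr0 subrr.
- have hdY : GT j.+2 (d Y) by apply: d_deg.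
  by rewrite (d_iy u _ hdY) // IH (br0r BT) subr0 subrr.
Qed.

Lemma dd_left i j X Y : (2 <= i)%N -> (2 <= j)%N -> GT i X -> GT j Y -> d (d X) = 0 ->
  d (brT (d X) Y) = s i.-1 *: brT (d X) (d Y).
Proof.
case: i => [|[|i]] // _ hj hX hY IH.
case: i hX IH => [|i] hX IH.
- have [w [e hw]] := T2_w hX.
  by rewrite e (d_iy w hj hY) (rT_Th0 _ hw) add0r sg1 scaleN1r.
- have hdX : GT i.+2 (d X) by apply: d_deg.
  by rewrite (d_xy _ _ hdX hY) // IH (br0l BT) add0r.
Qed.

Lemma dd_right i j X Y : (2 <= i)%N -> (2 <= j)%N -> GT i X -> GT j Y -> d (d Y) = 0 ->
  d (brT X (d Y)) = brT (d X) (d Y).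
Proof.
case: i => [|[|i]] // _; case: j => [|[|j]] // _ hX hY IH.
case: j hY IH => [|j] hY IH.
- have [w [e hw]] := T2_w hY.
  have hdX : GT i.+1 (d X) by apply: d_deg.
  rewrite e (nlA HT hX (tau_T1 w)) (lmN d_lin) (lmZ d_lin) (d_iy w _ hX) //.
  rewrite (rT_Th0 _ hw) sub0r (nlA HT (tau_T1 w) hdX) mul1n muln1.
  by rewrite opprK scalerA sgS mulNr sgg scaleN1r opprK.
- have hdY : GT j.+2 (d Y) by apply: d_deg.
  by rewrite (d_xy _ _ hX hdY) // IH (br0r BT) scaler0 addr0.
Qed.

Lemma dd_xy i j X Y : (2 <= i)%N -> (2 <= j)%N -> GT i X -> GT j Y ->
  d (d X) = 0 -> d (d Y) = 0 -> d (d (brT X Y)) = 0.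
Proof.
move=> hi hj hX hY IHx IHy.
rewrite (d_xy _ _ hX hY) // (lmD d_lin) (lmZ d_lin) (dd_left hi hj hX hY IHx).
rewrite (dd_right hi hj hX hY IHy).
case: i hi hX IHx => [|i] // hi hX IHx.
by rewrite sgS scaleNr addrN.
Qed.

Lemma dd_all X : d (d X) = 0.
Proof.
move: X; apply: T_ind.
- by rewrite !(lm0 d_lin).
- by move=> c X Y hX hY; rewrite !d_lin hX hY scaler0 addr0.
- by move=> v; rewrite d_tau (lm0 d_lin).
- move=> i j x y hx hy IHx IHy.
  have hX := GD_T hx; have hY := GD_T hy.
  case: i hx hX IHx => [|[|i]] hx hX IHx.
  + by rewrite (GD0 hx) (lm0 pi_lin) (br0l BT) !(lm0 d_lin).
  + case: (GD1 hx) => u ex; rewrite ex in hX IHx *.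
    case: j hy hY IHy => [|[|j]] hy hY IHy.
    * by rewrite (GD0 hy) (lm0 pi_lin) (br0r BT) !(lm0 d_lin).
    * by case: (GD1 hy) => v ->; rewrite d_ii' d_tau.
    * exact: (dd_iY u _ hY IHy).
  + case: j hy hY IHy => [|[|j]] hy hY IHy.
    * by rewrite (GD0 hy) (lm0 pi_lin) (br0r BT) !(lm0 d_lin).
    * case: (GD1 hy) => v ey; rewrite ey in hY *.
      rewrite (nlA HT hX hY) (lmN d_lin) (lmZ d_lin) (lmN d_lin) (lmZ d_lin).
      have := dd_iY v (isT : (2 <= i.+2)%N) hX IHx; rewrite /= => ->; by rewrite scaler0 oppr0.
    * exact: (dd_xy (isT : (2 <= i.+2)%N) (isT : (2 <= j.+2)%N) hX hY IHx IHy).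
Qed.

Lemma main_sec : exists d0 : T -> T,
    [/\ is_tower_differential circ Theta brT GT (fun v => pi (iota v)) rhoT d0,
        (forall d' : T -> T,
           is_tower_differential circ Theta brT GT (fun v => pi (iota v)) rhoT d' ->
           forall x, d' x = d0 x) &
        (forall i x, (1 <= i)%N -> GT i.+2 x -> d0 (d0 x) = 0)].
Proof.
exists d; split.
- split; first exact: d_lin.
  split; first exact: d_T1.
  split; first by move=> i x hi hx; apply: d_deg.
  split; first by move=> w i x _ _; apply: d_equiv.
  split; first exact: d_ii.
  split; first by move=> u i x hi hx; exact: (d_iy u hi hx).
  by move=> i j x y hi hj hx hy; exact: (d_xy hi hj hx hy).
- by move=> d' hd' x; apply: uniq_d.
- by move=> i x _ _; apply: dd_all.
Qed.

End Main.


Theorem mainTheorem7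
  (K : fieldType) (char0 : [pchar K] =i pred0)
  (g V : lmodType K) (brg : g -> g -> g) (act : g -> V -> V)
  (circ : V -> V -> V) (Theta : V -> g)
  (HLL : is_Lie_Leibniz_triple brg act circ Theta)
  (F : lmodType K) (brF : F -> F -> F) (GF : nat -> F -> Prop) (iota : V -> F)
  (Hfree : is_free_graded_Lie brF GF iota)
  (rhoF : g -> F -> F) (HrhoF : derivation_extension act brF GF iota rhoF)
  (T : lmodType K) (brT : T -> T -> T) (GT : nat -> T -> Prop)
  (HT : is_neg_graded_Lie brT GT)
  (pi : F -> T) (Hpi : is_graded_quotient brF GF brT GT pi (Kbullet circ brF GF iota rhoF))
  (rhoT : g -> T -> T) (HrhoT : forall a x, pi (rhoF a x) = rhoT a (pi x)) :
  exists d : T -> T,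
    [/\ is_tower_differential circ Theta brT GT (fun v => pi (iota v)) rhoT d,
        (forall d' : T -> T,
           is_tower_differential circ Theta brT GT (fun v => pi (iota v)) rhoT d' ->
           forall x, d' x = d x) &
        (forall i x, (1 <= i)%N -> GT i.+2 x -> d (d x) = 0)].
Proof. exact: (main_sec char0 HLL Hfree HrhoF HT Hpi HrhoT). Qed.
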